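(* Let $G$ be a graph, $K$ a clique of $G$, and $x$ a vertex not in $K$ which is either a vertex of $G$ adjacent to no vertex of $K$ or a new vertex not in $G$, such that all vertices of $K$ have the same closed neighborhood in $G-x$. For $0\le i\le |K|$, let $G_i$ be the graph obtained from $G$ (adding $x$ as a new vertex if it is not in $G$) by joining $x$ by edges to exactly $i$ vertices of $K$. Then \[ (i-j)X_{G_k}+(j-k)X_{G_i}+(k-i)X_{G_j}=0\qquad\text{for any } 0\le i\le j\le k\le |K|. \]
   Context: All graphs are finite simple graphs. The chromatic symmetric function of a graph $G$ is $X_G=\sum_{\kappa}\prod_{v\in V(G)}x_{\kappa(v)}$, where $\kappa$ ranges over proper colorings $\kappa:V(G)\to\{1,2,\dots\}$. A clique is a set of pairwise adjacent vertices. The closed neighborhood of a vertex is the set consisting of the vertex and all vertices adjacent to it. *)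

(* Defs.v *)
From mathcomp Require Import all_boot all_order all_algebra.
From mathcomp Require Import mpoly.
Set Implicit Arguments. Unset Strict Implicit. Unset Printing Implicit Defensive.
Import GRing.Theory.
Local Open Scope ring_scope.

Definition simple_graph (V : finType) (e : rel V) : Prop :=
  irreflexive e /\ ssrbool.symmetric e.

Definition is_clique (V : finType) (e : rel V) (K : {set V}) : Prop :=
  forall u v, u \in K -> v \in K -> u != v -> e u v.

Definition closed_nbhd_del (V : finType) (e : rel V) (x v : V) : {set V} :=
  [set w | (w != x) && ((w == v) || e v w)].

Definition proper_col (V : finType) (e : rel V) (n : nat) (k : {ffun V -> 'I_n}) : bool :=
  [forall u, forall v, e u v ==> (k u != k v)].

(* The chromatic symmetric function X_G = sum_kappa prod_v x_{kappa v},
   truncated to the variables x_1..x_n (i.e. x_m := 0 for m > n). *)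
Definition csf (V : finType) (e : rel V) (n : nat) : {mpoly int[n]} :=
  \sum_(k : {ffun V -> 'I_n} | proper_col e k) \prod_(v : V) 'X_(k v).

Definition join_to (V : finType) (e : rel V) (x : V) (S : {set V}) : rel V :=
  fun u v => [|| e u v, (u == x) && (v \in S) | (v == x) && (u \in S)].

Definition join_new (V : finType) (e : rel V) (S : {set V}) : rel (option V) :=
  fun u v => match u, v with
             | Some a, Some b => e a b
             | None, Some b => b \in S
             | Some a, None => a \in S
             | None, None => false
             end.

(* Main.v *)
Require Import Defs.
From mathcomp Require Import all_boot all_order all_algebra all_fingroup.
From mathcomp Require Import mpoly ring.
Import GRing.Theory.
Local Open Scope ring_scope.

Section Gen.
Variables (V : finType) (e : rel V) (x : V) (K : {set V}) (n : nat).
Hypothesis esym : ssrbool.symmetric e.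
Hypothesis eirr : irreflexive e.
Hypothesis Kcl : is_clique e K.
Hypothesis xK : x \notin K.
Hypothesis xnadj : forall v, v \in K -> ~~ e x v.
Hypothesis twin : forall u v w, u \in K -> v \in K -> w != v -> e u w -> e v w.

Definition mon (k : {ffun V -> 'I_n}) : {mpoly int[n]} := \prod_(v : V) 'X_(k v).
Definition Aw (w : V) : {mpoly int[n]} :=
  \sum_(k : {ffun V -> 'I_n} | proper_col e k && (k x == k w)) mon k.

Lemma proper_join (S : {set V}) (k : {ffun V -> 'I_n}) :
  proper_col (join_to e x S) k = proper_col e k && ~~ [exists w in S, k x == k w].
Proof.
apply/idP/idP.
- move=> /forallP H; apply/andP; split.
  + apply/forallP=> u; apply/forallP=> v; apply/implyP=> euv.
    by have /forallP/(_ v)/implyP := H u; apply; rewrite /join_to euv.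
  + apply/existsP=> [[w /andP [wS /eqP kw]]].
    have /forallP/(_ w)/implyP := H x.
    by rewrite /join_to eqxx wS orbT kw eqxx => /(_ isT).
- case/andP=> /forallP H /existsP H2.
  apply/forallP=> u; apply/forallP=> v; apply/implyP.
  rewrite /join_to => /or3P [euv|/andP [/eqP -> vS]|/andP [/eqP -> uS]].
  + by have /forallP/(_ v)/implyP := H u; apply.
  + by apply/negP=> /eqP kw; apply: H2; exists v; rewrite vS kw eqxx.
  + by apply/negP=> /eqP kw; apply: H2; exists u; rewrite uS kw eqxx.
Qed.

Lemma sum_Aw (S : {set V}) : S \subset K ->
  \sum_(w in S) Aw w =
  \sum_(k : {ffun V -> 'I_n} | proper_col e k && [exists w in S, k x == k w]) mon k.
Proof.
move=> SK.
rewrite /Aw.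
under eq_bigr do rewrite big_mkcond.
rewrite exchange_big /= [RHS]big_mkcond /=.
apply: eq_bigr => k _.
case: (boolP (proper_col e k)) => /= pk; last by rewrite big1.
case: (boolP [exists w in S, k x == k w]) => [/existsP [w0 /andP [w0S /eqP kw0]]|ne].
- rewrite (bigD1 w0) //= kw0 eqxx big1 ?addr0 // => w /andP [wS wne].
  case: eqP => // kw.
  have : e w0 w by apply: Kcl; [exact: (subsetP SK)|exact: (subsetP SK)|rewrite eq_sym].
  by have /forallP/(_ w)/implyP := (forallP pk) w0; rewrite kw => H /H; rewrite eqxx.
- rewrite big1 // => w wS; case: eqP => // kw.
  by case/existsP: ne; exists w; rewrite wS kw eqxx.
Qed.

Lemma csf_join (S : {set V}) : S \subset K ->
  csf (join_to e x S) n = csf e n - \sum_(w in S) Aw w.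
Proof.
move=> SK; rewrite sum_Aw // /csf [X in _ = X - _](bigID (fun k : {ffun V -> 'I_n} => [exists w in S, k x == k w])) /=.
rewrite /mon addrAC subrr add0r; apply: eq_bigl => k; exact: proper_join.
Qed.

Lemma auto u v a b : u \in K -> v \in K -> e a b -> e (tperm u v a) (tperm u v b).
Proof.
move=> uK vK.
case: tpermP => [->|->|au av]; case: tpermP => [->|->|bu bv];
  rewrite ?eirr //.
- by rewrite esym.
- by apply: (twin u v _ uK vK); apply/eqP.
- by rewrite esym.
- by apply: (twin v u _ vK uK); apply/eqP.
- by move=> eau; rewrite esym; apply: (twin u v _ uK vK); [apply/eqP|rewrite esym].
- by move=> eau; rewrite esym; apply: (twin v u _ vK uK); [apply/eqP|rewrite esym].
Qed.

Lemma Aw_eq u v : u \in K -> v \in K -> Aw u = Aw v.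
Proof.
move=> uK vK.
pose h (k : {ffun V -> 'I_n}) : {ffun V -> 'I_n} := [ffun y => k (tperm u v y)].
have hh : forall k, h (h k) = k.
  by move=> k; apply/ffunP=> y; rewrite !ffunE tpermK.
have hinj : injective h by apply: (can_inj hh).
have pr : forall k, proper_col e k -> proper_col e (h k).
  move=> k /forallP pk; apply/forallP=> a; apply/forallP=> b; apply/implyP=> eab.
  rewrite !ffunE; have /forallP/(_ (tperm u v b))/implyP := pk (tperm u v a).
  by apply; apply: auto.
have xu : x != u by apply: contraNneq xK => ->.
have xv : x != v by apply: contraNneq xK => ->.
rewrite /Aw (reindex_inj hinj); apply: eq_big => k.
- rewrite !ffunE tpermL tpermD 1?eq_sym //.
  congr andb; apply/idP/idP; first by move/pr; rewrite hh.
  exact: pr.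
- move=> _; rewrite /mon /h.
  rewrite [RHS](reindex_inj (@perm_inj _ (tperm u v))) /=.
  by apply: eq_bigr => y _; rewrite ffunE.
Qed.

Lemma affine : exists A : {mpoly int[n]}, forall S : {set V}, S \subset K ->
  csf (join_to e x S) n = csf e n - A *+ #|S|.
Proof.
have [K0|[w0 w0K]] := set_0Vmem K.
  exists 0 => S SK; rewrite csf_join // big1 ?mul0rn // => w wS.
  by move: (subsetP SK w wS); rewrite K0 inE.
exists (Aw w0) => S SK; rewrite csf_join //.
by rewrite (eq_bigr (fun _ => Aw w0)) ?sumr_const // => w wS; apply: Aw_eq => //; apply: (subsetP SK).
Qed.
End Gen.

Lemma alg n (X0 A : {mpoly int[n]}) (i j k : nat) :
  (X0 - A *+ k) *~ (i%:Z - j%:Z) + (X0 - A *+ i) *~ (j%:Z - k%:Z) + (X0 - A *+ j) *~ (k%:Z - i%:Z) = 0.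
Proof. ring. Qed.

Lemma csf_ext (V : finType) (e1 e2 : rel V) n : e1 =2 e2 -> csf e1 n = csf e2 n.
Proof.
move=> H; apply: eq_bigl => k; rewrite /proper_col.
by apply: eq_forallb => u; apply: eq_forallb => v; rewrite H.
Qed.

Theorem corollary2p3 :
  (* Case 1: x is a vertex of G adjacent to no vertex of K *)
  (forall (V : finType) (e : rel V) (K : {set V}) (x : V),
    simple_graph e -> is_clique e K -> x \notin K ->
    (forall v, v \in K -> ~~ e x v) ->
    (forall u v, u \in K -> v \in K -> closed_nbhd_del e x u = closed_nbhd_del e x v) ->
    forall (i j k : nat) (Si Sj Sk : {set V}),
      (i <= j <= k)%N -> (k <= #|K|)%N ->
      Si \subset K -> #|Si| = i ->
      Sj \subset K -> #|Sj| = j ->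
      Sk \subset K -> #|Sk| = k ->
      forall n : nat,
        csf (join_to e x Sk) n *~ (i%:Z - j%:Z)
        + csf (join_to e x Si) n *~ (j%:Z - k%:Z)
        + csf (join_to e x Sj) n *~ (k%:Z - i%:Z) = 0)
  /\
  (* Case 2: x is a new vertex (None) added to G *)
  (forall (V : finType) (e : rel V) (K : {set V}),
    simple_graph e -> is_clique e K ->
    (forall u v, u \in K -> v \in K ->
       [set w | (w == u) || e u w] = [set w | (w == v) || e v w]) ->
    forall (i j k : nat) (Si Sj Sk : {set V}),
      (i <= j <= k)%N -> (k <= #|K|)%N ->
      Si \subset K -> #|Si| = i ->
      Sj \subset K -> #|Sj| = j ->
      Sk \subset K -> #|Sk| = k ->
      forall n : nat,
        csf (join_new e Sk) n *~ (i%:Z - j%:Z)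
        + csf (join_new e Si) n *~ (j%:Z - k%:Z)
        + csf (join_new e Sj) n *~ (k%:Z - i%:Z) = 0).
Proof.
split.
- move=> V e K x [eirr esym] Kcl xK xnadj cn i j k Si Sj Sk _ _ SiK ci SjK cj SkK ck n.
  have twin : forall u v w, u \in K -> v \in K -> w != v -> e u w -> e v w.
    move=> u v w uK vK wv euw.
    have wx : w != x.
      by apply/eqP=> wx; move: euw; rewrite wx esym (negbTE (xnadj u uK)).
    have : w \in closed_nbhd_del e x u by rewrite inE wx euw orbT.
    by rewrite (cn u v uK vK) inE wx (negbTE wv).
  have [A HA] := @affine V e x K n esym eirr Kcl xK twin.
  by rewrite !HA // ci cj ck alg.
- move=> V e K [eirr esym] Kcl cn i j k Si Sj Sk _ _ SiK ci SjK cj SkK ck n.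
  have sinj : injective (@Some V) by move=> a b [].
  pose e' := join_new e set0.
  have ext : forall S : {set V}, csf (join_new e S) n = csf (join_to e' None (Some @: S)) n.
    move=> S; apply: csf_ext => [[a|] [b|]]; rewrite /join_to /e' /= ?mem_imset ?inE ?orbF //=.
    by have -> : (None \in Some @: S) = false by apply/negP => /imsetP [c _].
  have e'sym : ssrbool.symmetric e' by move=> [a|] [b|] //=; rewrite esym.
  have e'irr : irreflexive e' by move=> [a|] //=; rewrite eirr.
  have Kcl' : is_clique e' (Some @: K).
    by move=> u v /imsetP [a aK ->] /imsetP [b bK ->] ab; apply: Kcl => //; apply: contraNneq ab => ->.
  have xK : None \notin Some @: K by apply/imsetP => [[c _]].
  have twin : forall u v w, u \in Some @: K -> v \in Some @: K -> w != v -> e' u w -> e' v w.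
    move=> u v [c|] /imsetP [a aK ->] /imsetP [b bK ->] //= cb eac; last by rewrite inE in eac.
    have : c \in [set w | (w == a) || e a w] by rewrite inE eac orbT.
    rewrite (cn a b aK bK) inE => /orP [/eqP cb'|//].
    by move: cb; rewrite cb' eqxx.
  have [A HA] := @affine _ e' None _ n e'sym e'irr Kcl' xK twin.
  have sub : forall S : {set V}, S \subset K -> Some @: S \subset Some @: K by move=> S; exact: imsetS.
  by rewrite !ext !HA ?sub // !card_imset // ci cj ck alg.
Qed.
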